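(* Let $(B,\sqsubseteq)$ be a $\mathsf{DCPO}_\bot$-ordered functor with a cofree comonad such that $B$ preserves weak pullbacks, $\Sigma$ a functor with a free monad $(\Sigma^*,\eta,\mu)$, and $\rho\colon\Sigma B^\infty\Rightarrow B\Sigma^*$ a monotone biGSOS specification. For every $B$-coalgebra $c\colon X\to BX$, $\eta_X$ is a coalgebra homomorphism from $c$ to $c^\sharp$ and $\mu_X$ is a coalgebra homomorphism from $(c^\sharp)^\sharp$ to $c^\sharp$. Consequently $(\overline{\Sigma^*},\eta,\mu)$, where $\overline{\Sigma^*}(X,c)=(\Sigma^*X,c^\sharp)$ and $\overline{\Sigma^*}(h)=\Sigma^*h$, is a monad on $\mathsf{Coalg}(B)$ lifting the monad $(\Sigma^*,\eta,\mu)$ on $\mathsf{Set}$.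
   Context: An ordered functor $(B,\sqsubseteq)$ is a functor $B\colon\mathsf{Set}\to\mathsf{Set}$ together with a preorder $\sqsubseteq_{BX}$ on $BX$ for every set $X$, such that $Bf$ is monotone for every function $f$. It is $\mathsf{DCPO}_\bot$-ordered if moreover each $\sqsubseteq_{BX}$ is a partial order making $BX$ a pointed DCPO (least element and suprema of all directed subsets), and each $Bf$ is continuous, i.e. preserves suprema of all directed subsets including the empty one (hence preserves the least element). Relation lifting: for $R\subseteq X\times Y$ with projections $\pi_1,\pi_2$ and any functor $F$, $\mathsf{Rel}(F)(R)=\{(b,c)\in FX\times FY\mid\exists d\in FR.\ F\pi_1(d)=b,\ F\pi_2(d)=c\}$; $\mathsf{Rel}_{\sqsubseteq}(B)(R)=\{(b,c)\mid\exists b',c'.\ b\sqsubseteq b',\ (b',c')\in\mathsf{Rel}(B)(R),\ c'\sqsubseteq c\}$. For coalgebras $f\colon X\to BX$, $g\colon Y\to BY$, $R\subseteq X\times Y$ is a simulation if $(f(x),g(y))\in\mathsf{Rel}_{\sqsubseteq}(B)(R)$ for all $(x,y)\in R$; similarity is the greatest simulation. A coalgebra homomorphism from $c\colon X\to BX$ to $d\colon Y\to BY$ is $h\colon X\to Y$ with $Bh\circ c=d\circ h$; $\mathsf{Coalg}(B)$ is the category of $B$-coalgebras and homomorphisms. Cofree comonad: for each set $X$, $\theta_X\colon B^\infty X\to BB^\infty X$, $\epsilon_X\colon B^\infty X\to X$ with $\langle\theta_X,\epsilon_X\rangle$ a final $B(-)\times X$-coalgebra; for $f\colon X\to BX$,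 $f^\infty\colon X\to B^\infty X$ is the unique coalgebra morphism from $\langle f,\mathrm{id}_X\rangle$ to $\langle\theta_X,\epsilon_X\rangle$. The functor $B(-)\times X$ is ordered by $(b,x)\,\widetilde\sqsubseteq\,(c,y)$ iff $b\sqsubseteq c$ and $x=y$; $\lesssim_{B^\infty X}$ is the similarity of $\langle\theta_X,\epsilon_X\rangle$ with itself w.r.t. this order. Free monad: for each set $X$, $\iota_X\colon\Sigma\Sigma^*X\to\Sigma^*X$, $\eta_X\colon X\to\Sigma^*X$ with $[\iota_X,\eta_X]$ an initial algebra for $\Sigma(-)+X$; $\mu_X\colon\Sigma^*\Sigma^*X\to\Sigma^*X$ is the unique map with $\mu_X\circ\eta_{\Sigma^*X}=\mathrm{id}$ and $\mu_X\circ\iota_{\Sigma^*X}=\iota_X\circ\Sigma\mu_X$. A biGSOS specification is a natural transformation $\rho\colon\Sigma B^\infty\Rightarrow B\Sigma^*$; it is monotone if for every set $X$ and all $u,v\in\Sigma B^\infty X$ with $(u,v)\in\mathsf{Rel}(\Sigma)(\lesssim_{B^\infty X})$, $\rho_X(u)\sqsubseteq_{B\Sigma^*X}\rho_X(v)$. For $c\colon X\to BX$, $c^\sharp\colon\Sigma^*X\to B\Sigma^*X$ is the least fixed point (in the pointwise order) of the monotone map $\varphi_c(f)=[\,B\mu_X\circ\rho_{\Sigma^*X}\circ\Sigma f^\infty,\ B\eta_X\circ c\,]\circ[\iota_X,\eta_X]^{-1}$. A monad $(\overline T,\overline\eta,\overline\mu)$ on $\mathsf{Coalg}(B)$ lifts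 a monad $(T,\eta,\mu)$ on $\mathsf{Set}$ if $U\overline T=TU$, $U\overline\eta=\eta U$ and $U\overline\mu=\mu U$, with $U\colon\mathsf{Coalg}(B)\to\mathsf{Set}$ the forgetful functor. *)

(* Defs.v *)
(* Set-functors are modelled as functors on Coq's Type. *)
From Stdlib Require Import ClassicalEpsilon.

Record Functor := {
  fobj :> Type -> Type;
  fmap : forall X Y : Type, (X -> Y) -> fobj X -> fobj Y;
  fmap_id : forall X (u : fobj X), fmap X X (fun x => x) u = u;
  fmap_comp : forall X Y Z (f : X -> Y) (g : Y -> Z) (u : fobj X),
      fmap X Z (fun x => g (f x)) u = fmap Y Z g (fmap X Y f u)
}.
Arguments fmap {f} {X Y} _ _ : rename.

Definition RelT {X Y : Type} (R : X -> Y -> Prop) : Type :=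
  { p : X * Y | R (fst p) (snd p) }.
Definition rpi1 {X Y : Type} (R : X -> Y -> Prop) (p : RelT R) : X := fst (proj1_sig p).
Definition rpi2 {X Y : Type} (R : X -> Y -> Prop) (p : RelT R) : Y := snd (proj1_sig p).

Definition RelLift (F : Functor) {X Y : Type} (R : X -> Y -> Prop) (b : F X) (c : F Y) : Prop :=
  exists d : F (RelT R), fmap (rpi1 R) d = b /\ fmap (rpi2 R) d = c.

Record OrderedFunctor := {
  ofun :> Functor;
  ole : forall X : Type, ofun X -> ofun X -> Prop;
  ole_refl : forall X (a : ofun X), ole X a a;
  ole_trans : forall X (a b c : ofun X), ole X a b -> ole X b c -> ole X a c;
  fmap_mono : forall X Y (f : X -> Y) (a b : ofun X),
      ole X a b -> ole Y (fmap f a) (fmap f b)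
}.
Arguments ole {o} {X} _ _ : rename.

Definition RelLe (B : OrderedFunctor) {X Y : Type} (R : X -> Y -> Prop) (b : B X) (c : B Y) : Prop :=
  exists (b' : B X) (c' : B Y), ole b b' /\ RelLift B R b' c' /\ ole c' c.

Definition simulation (B : OrderedFunctor) {X Y : Type} (f : X -> B X) (g : Y -> B Y)
  (R : X -> Y -> Prop) : Prop :=
  forall x y, R x y -> RelLe B R (f x) (g y).

(* similarity = greatest simulation = union of all simulations *)
Definition similarity (B : OrderedFunctor) {X Y : Type} (f : X -> B X) (g : Y -> B Y)
  (x : X) (y : Y) : Prop :=
  exists R : X -> Y -> Prop, simulation B f g R /\ R x y.

(* Directed subsets: every pair has an upper bound in D (the empty set is directed). *)
Definition directed {A : Type} (le : A -> A -> Prop) (D : A -> Prop) : Prop :=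
  forall x y, D x -> D y -> exists z, D z /\ le x z /\ le y z.

Definition is_sup {A : Type} (le : A -> A -> Prop) (D : A -> Prop) (s : A) : Prop :=
  (forall x, D x -> le x s) /\ (forall u, (forall x, D x -> le x u) -> le s u).

Record DCPOFunctor := {
  dfun :> OrderedFunctor;
  dbot : forall X : Type, dfun X;
  dbot_least : forall X (a : dfun X), ole (dbot X) a;
  ole_antisym : forall X (a b : dfun X), ole a b -> ole b a -> a = b;
  dsup_exists : forall X (D : dfun X -> Prop),
      directed (@ole dfun X) D -> exists s, is_sup (@ole dfun X) D s;
  fmap_continuous : forall X Y (f : X -> Y) (D : dfun X -> Prop) (s : dfun X),
      directed (@ole dfun X) D -> is_sup (@ole dfun X) D s ->
      is_sup (@ole dfun Y) (fun b => exists a, D a /\ b = fmap f a) (fmap f s)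
}.

Definition preserves_weak_pullbacks (B : Functor) : Prop :=
  forall (X Y Z P : Type) (f : X -> Z) (g : Y -> Z) (p1 : P -> X) (p2 : P -> Y),
    (forall q, f (p1 q) = g (p2 q)) ->
    (forall x y, f x = g y -> exists q, p1 q = x /\ p2 q = y) ->
    forall (a : B X) (b : B Y), fmap f a = fmap g b ->
      exists w : B P, fmap p1 w = a /\ fmap p2 w = b.

(* ---------- Cofree comonad: final B(-) x X coalgebras ---------- *)
Record Cofree (B : Functor) := {
  Binf : Type -> Type;
  theta : forall X, Binf X -> B (Binf X);
  epsC : forall X, Binf X -> X;
  unfold : forall X Y : Type, (Y -> B Y * X) -> Y -> Binf X;
  unfold_theta : forall X Y (g : Y -> B Y * X) y,
      theta X (unfold X Y g y) = fmap (unfold X Y g) (fst (g y));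
  unfold_eps : forall X Y (g : Y -> B Y * X) y,
      epsC X (unfold X Y g y) = snd (g y);
  unfold_unique : forall X Y (g : Y -> B Y * X) (h : Y -> Binf X),
      (forall y, theta X (h y) = fmap h (fst (g y)) /\ epsC X (h y) = snd (g y)) ->
      forall y, h y = unfold X Y g y
}.
Arguments Binf {B} _ _.
Arguments theta {B} _ {X} _.
Arguments epsC {B} _ {X} _.
Arguments unfold {B} _ {X Y} _ _.

Definition finf {B : Functor} (C : Cofree B) {X : Type} (f : X -> B X) : X -> Binf C X :=
  unfold C (fun x => (f x, x)).

Definition Binf_map {B : Functor} (C : Cofree B) {X Y : Type} (f : X -> Y) : Binf C X -> Binf C Y :=
  unfold C (fun t => (theta C t, f (epsC C t))).

(* ---------- Free monad: initial Sigma(-) + X algebras ---------- *)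
Record FreeMonad (S : Functor) := {
  Sstar : Type -> Type;
  iota : forall X, S (Sstar X) -> Sstar X;
  eta : forall X, X -> Sstar X;
  fold : forall X A : Type, (S A -> A) -> (X -> A) -> Sstar X -> A;
  fold_iota : forall X A (a : S A -> A) (e : X -> A) s,
      fold X A a e (iota X s) = a (fmap (fold X A a e) s);
  fold_eta : forall X A (a : S A -> A) (e : X -> A) x,
      fold X A a e (eta X x) = e x;
  fold_unique : forall X A (a : S A -> A) (e : X -> A) (h : Sstar X -> A),
      (forall s, h (iota X s) = a (fmap h s)) -> (forall x, h (eta X x) = e x) ->
      forall t, h t = fold X A a e t
}.
Arguments Sstar {S} _ _.
Arguments iota {S} _ {X} _.
Arguments eta {S} _ {X} _.
Arguments fold {S} _ {X A} _ _ _.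

Definition mu {S : Functor} (M : FreeMonad S) {X : Type} : Sstar M (Sstar M X) -> Sstar M X :=
  fold M (iota M) (fun t => t).

Definition Smap {S : Functor} (M : FreeMonad S) {X Y : Type} (f : X -> Y) : Sstar M X -> Sstar M Y :=
  fold M (iota M) (fun x => eta M (f x)).

(* [iota, eta] and its inverse (Lambek) *)
Definition iota_eta {S : Functor} (M : FreeMonad S) {X : Type}
  (u : S (Sstar M X) + X) : Sstar M X :=
  match u with inl s => iota M s | inr x => eta M x end.

Definition unroll {S : Functor} (M : FreeMonad S) {X : Type} : Sstar M X -> S (Sstar M X) + X :=
  fold M (fun s => inl (fmap (iota_eta M) s)) inr.

Definition prodF (B : Functor) (X : Type) : Functor.
Proof.
  refine {| fobj := fun Y => (B Y * X)%type;
            fmap := fun Y Z (f : Y -> Z) p => (fmap f (fst p), snd p) |}.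
  - intros Y [b x]; simpl; rewrite fmap_id; reflexivity.
  - intros Y Z W f g [b x]; simpl; rewrite fmap_comp; reflexivity.
Defined.

Definition prodOF (B : OrderedFunctor) (X : Type) : OrderedFunctor.
Proof.
  refine {| ofun := prodF B X;
            ole := fun Y (p q : B Y * X) => ole (fst p) (fst q) /\ snd p = snd q |}.
  - intros Y p; split; [apply ole_refl | reflexivity].
  - intros Y p q r [H1 H2] [H3 H4]; split; [eapply ole_trans; eauto | congruence].
  - intros Y Z f p q [H1 H2]; simpl; split; [apply fmap_mono; exact H1 | exact H2].
Defined.

Definition lesssim (B : OrderedFunctor) (C : Cofree B) (X : Type) : Binf C X -> Binf C X -> Prop :=
  @similarity (prodOF B X) (Binf C X) (Binf C X)
    (fun t => (theta C t, epsC C t)) (fun t => (theta C t, epsC C t)).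

Definition biGSOS_natural {B S : Functor} (C : Cofree B) (M : FreeMonad S)
  (rho : forall X, S (Binf C X) -> B (Sstar M X)) : Prop :=
  forall X Y (f : X -> Y) (u : S (Binf C X)),
    rho Y (fmap (Binf_map C f) u) = fmap (Smap M f) (rho X u).

Definition biGSOS_monotone {B : OrderedFunctor} {S : Functor} (C : Cofree B) (M : FreeMonad S)
  (rho : forall X, S (Binf C X) -> B (Sstar M X)) : Prop :=
  forall X (u v : S (Binf C X)),
    RelLift S (lesssim B C X) u v -> ole (rho X u) (rho X v).

Definition phi {B S : Functor} (C : Cofree B) (M : FreeMonad S)
  (rho : forall X, S (Binf C X) -> B (Sstar M X)) {X : Type} (c : X -> B X)
  (f : Sstar M X -> B (Sstar M X)) : Sstar M X -> B (Sstar M X) :=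
  fun t => match unroll M t with
           | inl s => fmap (mu M) (rho (Sstar M X) (fmap (finf C f) s))
           | inr x => fmap (eta M) (c x)
           end.

Definition is_lfp {B : OrderedFunctor} {S : Functor} (C : Cofree B) (M : FreeMonad S)
  (rho : forall X, S (Binf C X) -> B (Sstar M X)) {X : Type} (c : X -> B X)
  (f : Sstar M X -> B (Sstar M X)) : Prop :=
  (forall t, phi C M rho c f t = f t) /\
  (forall g, (forall t, phi C M rho c g t = g t) -> forall t, ole (f t) (g t)).

Definition sharp {B : DCPOFunctor} {S : Functor} (C : Cofree B) (M : FreeMonad S)
  (rho : forall X, S (Binf C X) -> B (Sstar M X)) {X : Type} (c : X -> B X) :
  Sstar M X -> B (Sstar M X) :=
  epsilon (inhabits (fun _ => dbot B (Sstar M X))) (is_lfp C M rho c).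

Definition coalg_hom (B : Functor) {X Y : Type} (c : X -> B X) (d : Y -> B Y) (h : X -> Y) : Prop :=
  forall x, fmap h (c x) = d (h x).

(* (Sigma^*-bar, eta, mu) is a monad on Coalg(B) lifting (Sigma^*, eta, mu):
   Sigma^*-bar is a functor on Coalg(B) (well-defined on morphisms, functor laws),
   eta and mu have coalgebra-homomorphism components, they are natural,
   and the monad laws hold (U is faithful, so all these are checked in Set). *)
Definition lifted_monad (B : DCPOFunctor) {S : Functor} (C : Cofree B) (M : FreeMonad S)
  (rho : forall X, S (Binf C X) -> B (Sstar M X)) : Prop :=
  (forall X Y (c : X -> B X) (d : Y -> B Y) (h : X -> Y),
      coalg_hom B c d h -> coalg_hom B (sharp C M rho c) (sharp C M rho d) (Smap M h)) /\
  (forall X (t : Sstar M X), Smap M (fun x => x) t = t) /\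
  (forall X Y Z (f : X -> Y) (g : Y -> Z) (t : Sstar M X),
      Smap M (fun x => g (f x)) t = Smap M g (Smap M f t)) /\
  (forall X (c : X -> B X), coalg_hom B c (sharp C M rho c) (eta M)) /\
  (forall X (c : X -> B X),
      coalg_hom B (sharp C M rho (sharp C M rho c)) (sharp C M rho c) (mu M)) /\
  (forall X Y (f : X -> Y) (x : X), Smap M f (eta M x) = eta M (f x)) /\
  (forall X Y (f : X -> Y) (t : Sstar M (Sstar M X)),
      Smap M f (mu M t) = mu M (Smap M (Smap M f) t)) /\
  (forall X (t : Sstar M X), mu M (eta M t) = t) /\
  (forall X (t : Sstar M X), mu M (Smap M (eta M) t) = t) /\
  (forall X (t : Sstar M (Sstar M (Sstar M X))), mu M (mu M t) = mu M (Smap M (mu M) t)).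

(* Main.v *)
Require Import Defs.
From Stdlib Require Import ClassicalEpsilon FunctionalExtensionality.

Lemma unroll_eta {S : Functor} (M : FreeMonad S) {X : Type} (x : X) :
  unroll M (eta M x) = inr x.
Proof. unfold unroll. rewrite fold_eta. reflexivity. Qed.

Lemma iota_eta_unroll {S : Functor} (M : FreeMonad S) {X : Type} (t : Sstar M X) :
  iota_eta M (unroll M t) = t.
Proof.
  transitivity (fold M (iota M) (eta M) t).
  - apply (fold_unique _ M X _ (iota M) (eta M) (fun t => iota_eta M (unroll M t))).
    + intro s. unfold unroll at 1. rewrite fold_iota. simpl.
      rewrite <- fmap_comp. reflexivity.
    + intro x. rewrite unroll_eta. reflexivity.
  - symmetry. apply (fold_unique _ M X _ (iota M) (eta M) (fun t => t)).
    + intro s. rewrite fmap_id. reflexivity.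
    + reflexivity.
Qed.

Lemma unroll_iota {S : Functor} (M : FreeMonad S) {X : Type} (s : S (Sstar M X)) :
  unroll M (iota M s) = inl s.
Proof.
  unfold unroll at 1. rewrite fold_iota. f_equal.
  rewrite <- fmap_comp.
  transitivity (fmap (fun x : Sstar M X => x) s); [|apply fmap_id].
  f_equal. apply functional_extensionality. intro t. apply iota_eta_unroll.
Qed.

Lemma mu_eta {S : Functor} (M : FreeMonad S) {X : Type} (t : Sstar M X) :
  mu M (eta M t) = t.
Proof. unfold mu. rewrite fold_eta. reflexivity. Qed.

Lemma mu_iota {S : Functor} (M : FreeMonad S) {X : Type} (s : S (Sstar M (Sstar M X))) :
  mu M (iota M s) = iota M (fmap (mu M) s).
Proof. unfold mu at 1. rewrite fold_iota. reflexivity. Qed.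

Lemma Smap_eta {S : Functor} (M : FreeMonad S) {X Y : Type} (f : X -> Y) x :
  Smap M f (eta M x) = eta M (f x).
Proof. unfold Smap. rewrite fold_eta. reflexivity. Qed.

Lemma Smap_iota {S : Functor} (M : FreeMonad S) {X Y : Type} (f : X -> Y) s :
  Smap M f (iota M s) = iota M (fmap (Smap M f) s).
Proof. unfold Smap at 1. rewrite fold_iota. reflexivity. Qed.

Lemma Smap_id {S : Functor} (M : FreeMonad S) {X : Type} (t : Sstar M X) :
  Smap M (fun x => x) t = t.
Proof.
  unfold Smap. symmetry.
  apply (fold_unique _ M X _ (iota M) (fun x => eta M x) (fun t => t)).
  - intro s. rewrite fmap_id. reflexivity.
  - reflexivity.
Qed.

Lemma Smap_comp {S : Functor} (M : FreeMonad S) {X Y Z : Type} (f : X -> Y) (g : Y -> Z) t :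
  Smap M (fun x => g (f x)) t = Smap M g (Smap M f t).
Proof.
  unfold Smap at 1. symmetry.
  apply (fold_unique _ M X _ (iota M) (fun x => eta M (g (f x))) (fun t => Smap M g (Smap M f t))).
  - intro s. rewrite Smap_iota, Smap_iota. rewrite <- fmap_comp. reflexivity.
  - intro x. rewrite Smap_eta, Smap_eta. reflexivity.
Qed.

Lemma mu_Smap_eta {S : Functor} (M : FreeMonad S) {X : Type} (t : Sstar M X) :
  mu M (Smap M (eta M) t) = t.
Proof.
  transitivity (fold M (iota M) (eta M) t).
  - apply (fold_unique _ M X _ (iota M) (eta M) (fun t => mu M (Smap M (eta M) t))).
    + intro s. rewrite Smap_iota, mu_iota, <- fmap_comp. reflexivity.
    + intro x. rewrite Smap_eta, mu_eta. reflexivity.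
  - symmetry. apply (fold_unique _ M X _ (iota M) (eta M) (fun t => t)).
    + intro s. rewrite fmap_id. reflexivity.
    + reflexivity.
Qed.

Lemma Smap_mu {S : Functor} (M : FreeMonad S) {X Y : Type} (f : X -> Y) t :
  Smap M f (mu M t) = mu M (Smap M (Smap M f) t).
Proof.
  transitivity (fold M (iota M) (Smap M f) t).
  - apply (fold_unique _ M _ _ (iota M) (Smap M f) (fun t => Smap M f (mu M t))).
    + intro s. rewrite mu_iota, Smap_iota, <- fmap_comp. reflexivity.
    + intro x. rewrite mu_eta. reflexivity.
  - symmetry. apply (fold_unique _ M _ _ (iota M) (Smap M f) (fun t => mu M (Smap M (Smap M f) t))).
    + intro s. rewrite Smap_iota, mu_iota, <- fmap_comp. reflexivity.
    + intro x. rewrite Smap_eta, mu_eta. reflexivity.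
Qed.

Lemma mu_mu {S : Functor} (M : FreeMonad S) {X : Type} (t : Sstar M (Sstar M (Sstar M X))) :
  mu M (mu M t) = mu M (Smap M (mu M) t).
Proof.
  transitivity (fold M (iota M) (mu M) t).
  - apply (fold_unique _ M _ _ (iota M) (mu M) (fun t => mu M (mu M t))).
    + intro s. rewrite mu_iota, mu_iota, <- fmap_comp. reflexivity.
    + intro x. rewrite mu_eta. reflexivity.
  - symmetry. apply (fold_unique _ M _ _ (iota M) (mu M) (fun t => mu M (Smap M (mu M) t))).
    + intro s. rewrite Smap_iota, mu_iota, <- fmap_comp. reflexivity.
    + intro x. rewrite Smap_eta, mu_eta. reflexivity.
Qed.

Lemma theta_finf {B : Functor} (C : Cofree B) {X : Type} (f : X -> B X) x :
  theta C (finf C f x) = fmap (finf C f) (f x).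
Proof. unfold finf. rewrite unfold_theta. reflexivity. Qed.

Lemma eps_finf {B : Functor} (C : Cofree B) {X : Type} (f : X -> B X) x :
  epsC C (finf C f x) = x.
Proof. unfold finf. rewrite unfold_eps. reflexivity. Qed.

Lemma theta_Bmap {B : Functor} (C : Cofree B) {X Y : Type} (f : X -> Y) t :
  theta C (Binf_map C f t) = fmap (Binf_map C f) (theta C t).
Proof. unfold Binf_map. rewrite unfold_theta. reflexivity. Qed.

Lemma eps_Bmap {B : Functor} (C : Cofree B) {X Y : Type} (f : X -> Y) t :
  epsC C (Binf_map C f t) = f (epsC C t).
Proof. unfold Binf_map. rewrite unfold_eps. reflexivity. Qed.

Lemma pataraia (A : Type) (le : A -> A -> Prop)
  (le_refl : forall a, le a a) (le_trans : forall a b c, le a b -> le b c -> le a c)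
  (F : A -> A) (Fmono : forall a b, le a b -> le (F a) (F b))
  (G : A -> Prop) (a0 : A) (Ga0 : G a0) (GF : forall a, G a -> G (F a))
  (Ginfl : forall a, G a -> le a (F a))
  (Gsup : forall D, directed le D -> (forall a, D a -> G a) -> exists s, is_sup le D s /\ G s) :
  exists p, G p /\ le (F p) p /\ le p (F p).
Proof.
  set (Ms := fun g : A -> A => (forall x, G x -> G (g x)) /\ (forall x, G x -> le x (g x)) /\
              (forall x y, G x -> G y -> le x y -> le (g x) (g y))).
  set (Dx := fun x b => exists g, Ms g /\ b = g x).
  assert (Hd : forall x, G x -> exists s, is_sup le (Dx x) s /\ G s).
  { intros x Gx. apply Gsup.
    - intros b1 b2 [g1 [M1 ->]] [g2 [M2 ->]]. exists (g1 (g2 x)).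
      destruct M1 as [Ga [Gi Gm]]. destruct M2 as [Ha [Hi Hm]].
      split; [|split].
      + exists (fun y => g1 (g2 y)). split; [|reflexivity].
        split; [|split]; intros.
        * auto.
        * eapply le_trans; [apply Hi; auto| apply Gi; auto].
        * apply Gm; auto.
      + apply Gm; auto.
      + apply Gi; auto.
    - intros a [g [[Ga _] ->]]. auto. }
  set (t := fun x => epsilon (inhabits x) (fun s => G x -> is_sup le (Dx x) s /\ G s)).
  assert (Ht : forall x, G x -> is_sup le (Dx x) (t x) /\ G (t x)).
  { intros x Gx. unfold t.
    refine (epsilon_spec (inhabits x) (fun s => G x -> is_sup le (Dx x) s /\ G s) _ Gx).
    destruct (Hd x Gx) as [s Hs]. exists s. auto. }
  assert (Mt : Ms t).
  { split; [|split].
    - intros x Gx. apply Ht; auto.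
    - intros x Gx. apply (proj1 (proj1 (Ht x Gx))). exists (fun y => y).
      split; [|reflexivity]. split; [|split]; auto.
    - intros x y Gx Gy Hxy. apply (proj2 (proj1 (Ht x Gx))).
      intros b [g [[Ga [Gi Gm]] ->]]. eapply le_trans; [apply Gm; eauto|].
      apply (proj1 (proj1 (Ht y Gy))). exists g. split; [split; auto|reflexivity]. }
  assert (MFt : Ms (fun x => F (t x))).
  { destruct Mt as [Ga [Gi Gm]]. split; [|split].
    - auto.
    - intros x Gx. eapply le_trans; [apply Gi; auto| apply Ginfl; auto].
    - intros. apply Fmono. auto. }
  exists (t a0). destruct (Ht a0 Ga0) as [[Hub Hl] Gt]. split; [auto|split].
  - apply Hub. exists (fun x => F (t x)). auto.
  - apply Ginfl; auto.
Qed.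

Lemma sim_gen (B : OrderedFunctor) (C : Cofree B) (X Z : Type) (al be : Z -> Binf C X)
  (H : forall z, exists u : B Z, ole (theta C (al z)) (fmap al u) /\
        ole (fmap be u) (theta C (be z)) /\ epsC C (al z) = epsC C (be z)) :
  forall z, lesssim B C X (al z) (be z).
Proof.
  intro z0.
  exists (fun a b => exists z, a = al z /\ b = be z). split; [|eauto].
  intros a b [z [-> ->]]. destruct (H z) as [u [H1 [H2 H3]]].
  set (R := fun a b : Binf C X => exists z, a = al z /\ b = be z).
  set (w := fun z' : Z => exist (fun p : Binf C X * Binf C X => R (fst p) (snd p))
             (al z', be z') (ex_intro _ z' (conj eq_refl eq_refl))).
  exists (fmap al u, epsC C (al z)), (fmap be u, epsC C (be z)).
  split; [|split].
  - simpl. split; auto.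
  - exists (fmap w u, epsC C (al z)). simpl. split.
    + f_equal. rewrite <- fmap_comp. reflexivity.
    + rewrite H3. f_equal. rewrite <- fmap_comp. reflexivity.
  - simpl. split; auto.
Qed.

Lemma rellift_fmap (S : Functor) X Y Z (R : X -> Y -> Prop) (al : Z -> X) (be : Z -> Y)
  (H : forall z, R (al z) (be z)) s : RelLift S R (fmap al s) (fmap be s).
Proof.
  exists (fmap (fun z => exist (fun p : X * Y => R (fst p) (snd p)) (al z, be z) (H z)) s).
  split; rewrite <- fmap_comp; reflexivity.
Qed.

Lemma finf_mono (B : OrderedFunctor) (C : Cofree B) X (f g : X -> B X)
  (H : forall x, ole (f x) (g x)) : forall x, lesssim B C X (finf C f x) (finf C g x).
Proof.
  apply sim_gen. intro x. exists (g x). rewrite !theta_finf, !eps_finf.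
  split; [apply fmap_mono; auto|split; [apply ole_refl|reflexivity]].
Qed.

Lemma phi_mono (B : DCPOFunctor) (C : Cofree B) (S : Functor) (M : FreeMonad S)
  rho (Hmon : biGSOS_monotone C M rho) X (c : X -> B X) f g
  (H : forall t, ole (f t) (g t)) : forall t, ole (phi C M rho c f t) (phi C M rho c g t).
Proof.
  intro t. unfold phi. destruct (unroll M t) as [s|x].
  - apply fmap_mono. apply Hmon. apply rellift_fmap. apply finf_mono. exact H.
  - apply ole_refl.
Qed.

Lemma lfp_ind (B : DCPOFunctor) (C : Cofree B) (S : Functor) (M : FreeMonad S)
  rho (Hmon : biGSOS_monotone C M rho) (X : Type) (c : X -> B X)
  (Q : (Sstar M X -> B (Sstar M X)) -> Prop)
  (Qbot : Q (fun _ => dbot B (Sstar M X)))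
  (Qphi : forall f, Q f ->
     (forall g, (forall t, phi C M rho c g t = g t) -> forall t, ole (f t) (g t)) ->
     Q (phi C M rho c f))
  (Qsup : forall (D : (Sstar M X -> B (Sstar M X)) -> Prop) s,
     directed (fun f g => forall t, ole (f t) (g t)) D -> (forall f, D f -> Q f) ->
     (forall t, is_sup ole (fun b => exists f, D f /\ b = f t) (s t)) -> Q s) :
  is_lfp C M rho c (sharp C M rho c) /\ Q (sharp C M rho c).
Proof.
  set (lef := fun f g : Sstar M X -> B (Sstar M X) => forall t, ole (f t) (g t)).
  set (F := phi C M rho c).
  destruct (pataraia _ lef (fun a t => ole_refl _ _ (a t))
             (fun a b c H1 H2 t => ole_trans _ _ _ _ _ (H1 t) (H2 t))
             F (phi_mono B C S M rho Hmon X c)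
             (fun f => lef f (F f) /\ (forall g, (forall t, F g t = g t) -> lef f g) /\ Q f)
             (fun _ => dbot B (Sstar M X))) as [p [[_ [Hpl HQ]] [H1 H2]]].
  - split; [|split]; auto; intros; intro; apply dbot_least.
  - intros a [Ha [Hb Hc]]. split; [|split].
    + intro t. apply phi_mono; auto.
    + intros g Hg t. rewrite <- Hg. apply phi_mono; auto. apply Hb; auto.
    + apply Qphi; auto.
  - intros a [Ha _]. exact Ha.
  - intros D HD HG.
    set (s := fun t => epsilon (inhabits (dbot B (Sstar M X)))
                 (fun b => is_sup ole (fun b => exists f, D f /\ b = f t) b)).
    assert (Hs : forall t, is_sup ole (fun b => exists f, D f /\ b = f t) (s t)).
    { intro t. unfold s. apply epsilon_spec. apply dsup_exists.
      intros x y [f [Df ->]] [g [Dg ->]]. destruct (HD f g Df Dg) as [h [Dh [Hf Hg]]].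
      exists (h t). split; [eauto|auto]. }
    assert (Dle : forall f, D f -> lef f s).
    { intros f Df t. apply (proj1 (Hs t)). eauto. }
    exists s. split; [split|split; [|split]].
    + exact Dle.
    + intros u Hu t. apply (proj2 (Hs t)). intros b [f [Df ->]]. apply Hu; auto.
    + intro t. apply (proj2 (Hs t)). intros b [f [Df ->]].
      eapply ole_trans; [apply (proj1 (HG f Df))|]. apply phi_mono; auto. apply Dle; auto.
    + intros g Hg t. apply (proj2 (Hs t)). intros b [f [Df ->]]. apply (proj1 (proj2 (HG f Df))); auto.
    + apply (Qsup D s HD); auto. intros f Df; apply HG; auto.
  - assert (Hp : is_lfp C M rho c p).
    { split.
      + intro t. apply ole_antisym; auto.
      + intros g Hg t. apply Hpl; auto. }
    assert (Hsh : is_lfp C M rho c (sharp C M rho c)).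
    { unfold sharp. apply epsilon_spec. exists p; exact Hp. }
    assert (E : sharp C M rho c = p).
    { apply functional_extensionality. intro t. apply ole_antisym.
      - apply (proj2 Hsh). apply (proj1 Hp).
      - apply (proj2 Hp). apply (proj1 Hsh). }
    rewrite E. split; [exact Hp | exact HQ].
Qed.

Lemma adm_bot (B : DCPOFunctor) X V (k : X -> V) (u : B V) : ole (fmap k (dbot B X)) u.
Proof.
  destruct (fmap_continuous B X V k (fun _ => False) (dbot B X)) as [_ L].
  - intros x y [].
  - split; [intros x []| intros; apply dbot_least].
  - apply L. intros x [a [[] _]].
Qed.

Lemma adm_sup (B : DCPOFunctor) W X V T (k : X -> V) (m : T -> W) (R : T -> B V)
  (D : (W -> B X) -> Prop) s
  (HD : directed (fun f g => forall t, ole (f t) (g t)) D)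
  (HQ : forall f, D f -> forall t, ole (fmap k (f (m t))) (R t))
  (Hs : forall t, is_sup ole (fun b => exists f, D f /\ b = f t) (s t)) :
  forall t, ole (fmap k (s (m t))) (R t).
Proof.
  intro t.
  assert (Hdir : directed ole (fun b : B X => exists f : W -> B X, D f /\ b = f (m t))).
  { intros x y [f [Df ->]] [g [Dg ->]]. destruct (HD f g Df Dg) as [h [Dh [Hf Hg]]].
    exists (h (m t)). split; [eauto|auto]. }
  destruct (fmap_continuous B X V k _ _ Hdir (Hs (m t))) as [_ L].
  apply L. intros x [a [[f [Df ->]] ->]]. apply HQ; auto.
Qed.

Lemma fmap_ext (F : Functor) X Y (f g : X -> Y) (H : forall x, f x = g x) (u : F X) :
  fmap f u = fmap g u.
Proof. replace f with g; [reflexivity|]. symmetry; apply functional_extensionality; exact H. Qed.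

Lemma fmap_mu_mu {S : Functor} (M : FreeMonad S) (F : Functor) X
  (v : F (Sstar M (Sstar M (Sstar M X)))) :
  fmap (mu M) (fmap (mu M) v) = fmap (mu M) (fmap (Smap M (mu M)) v).
Proof. rewrite <- !fmap_comp. apply fmap_ext. intro; apply mu_mu. Qed.

Lemma fmap_mu_eta {S : Functor} (M : FreeMonad S) (F : Functor) X (v : F (Sstar M X)) :
  fmap (mu M) (fmap (eta M) v) = v.
Proof. rewrite <- fmap_comp. rewrite (fmap_ext _ _ _ _ (fun x => x)); [apply fmap_id|]. intro; apply mu_eta. Qed.

Lemma fmap_Smap_mu {S : Functor} (M : FreeMonad S) (F : Functor) X Y (h : X -> Y)
  (v : F (Sstar M (Sstar M X))) :
  fmap (Smap M h) (fmap (mu M) v) = fmap (mu M) (fmap (Smap M (Smap M h)) v).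
Proof. rewrite <- !fmap_comp. apply fmap_ext. intro; apply Smap_mu. Qed.

Lemma fmap_Smap_eta {S : Functor} (M : FreeMonad S) (F : Functor) X Y (h : X -> Y) (v : F X) :
  fmap (Smap M h) (fmap (eta M) v) = fmap (eta M) (fmap h v).
Proof. rewrite <- !fmap_comp. apply fmap_ext. intro; apply Smap_eta. Qed.

Lemma phi_eta {B S : Functor} (C : Cofree B) (M : FreeMonad S) rho {X} (c : X -> B X) f x :
  phi C M rho c f (eta M x) = fmap (eta M) (c x).
Proof. unfold phi. rewrite unroll_eta. reflexivity. Qed.

Lemma phi_iota {B S : Functor} (C : Cofree B) (M : FreeMonad S) rho {X} (c : X -> B X) f s :
  phi C M rho c f (iota M s) = fmap (mu M) (rho _ (fmap (finf C f) s)).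
Proof. unfold phi. rewrite unroll_iota. reflexivity. Qed.

Lemma sharp_fix (B : DCPOFunctor) (C : Cofree B) (S : Functor) (M : FreeMonad S)
  rho (Hmon : biGSOS_monotone C M rho) X (c : X -> B X) t :
  phi C M rho c (sharp C M rho c) t = sharp C M rho c t.
Proof.
  destruct (lfp_ind B C S M rho Hmon X c (fun _ => True)) as [[H _] _]; auto.
Qed.

Lemma sharp_least (B : DCPOFunctor) (C : Cofree B) (S : Functor) (M : FreeMonad S)
  rho (Hmon : biGSOS_monotone C M rho) X (c : X -> B X) g :
  (forall t, phi C M rho c g t = g t) -> forall t, ole (sharp C M rho c t) (g t).
Proof.
  destruct (lfp_ind B C S M rho Hmon X c (fun _ => True)) as [[_ H] _]; auto.
Qed.

Lemma ind_split {S : Functor} (M : FreeMonad S) {X} (P : Sstar M X -> Prop)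
  (He : forall x, P (eta M x)) (Hi : forall s, P (iota M s)) : forall t, P t.
Proof.
  intro t. rewrite <- (iota_eta_unroll M t). destruct (unroll M t); simpl; auto.
Qed.

Lemma mu_hom (B : DCPOFunctor) (C : Cofree B) (S : Functor) (M : FreeMonad S)
  rho (Hnat : biGSOS_natural C M rho) (Hmon : biGSOS_monotone C M rho) X (c : X -> B X) :
  coalg_hom B (sharp C M rho (sharp C M rho c)) (sharp C M rho c) (mu M).
Proof.
  set (d := sharp C M rho c). set (e := sharp C M rho d).
  assert (Fd : forall t, phi C M rho c d t = d t) by (intro; apply sharp_fix; exact Hmon).
  assert (Fe : forall t, phi C M rho d e t = e t) by (intro; apply sharp_fix; exact Hmon).
  assert (Ld : forall g, (forall t, phi C M rho c g t = g t) -> forall t, ole (d t) (g t))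
    by (apply sharp_least; exact Hmon).
  assert (D1 : forall t, ole (fmap (mu M) (e t)) (d (mu M t))).
  { refine (proj2 (lfp_ind B C S M rho Hmon _ d
      (fun g => forall t, ole (fmap (mu M) (g t)) (d (mu M t))) _ _ _)).
    - intro t. apply adm_bot.
    - intros g Hg _. apply ind_split.
      + intro u. rewrite phi_eta, fmap_mu_eta, mu_eta. apply ole_refl.
      + intro s. rewrite phi_iota, mu_iota. rewrite <- (Fd (iota M _)).
        rewrite phi_iota. rewrite fmap_mu_mu, <- Hnat.
        apply fmap_mono. apply Hmon. rewrite <- !fmap_comp. apply rellift_fmap.
        apply sim_gen. intro z. exists (g z).
        rewrite theta_Bmap, !theta_finf, eps_Bmap, !eps_finf.
        split; [|split; [|reflexivity]].
        * rewrite <- fmap_comp. apply ole_refl.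
        * rewrite (fmap_comp _ _ _ _ (mu M) (finf C d)). apply fmap_mono. apply Hg.
    - intros D s HD HQ Hs.
      exact (adm_sup B _ _ _ _ (mu M) (fun t => t) (fun t => d (mu M t)) D s HD HQ Hs). }
  assert (D2 : forall t, ole (fmap (fun x => x) (d (mu M t))) (fmap (mu M) (e t))).
  { refine (proj2 (lfp_ind B C S M rho Hmon _ c
      (fun f => forall t, ole (fmap (fun x => x) (f (mu M t))) (fmap (mu M) (e t))) _ _ _)).
    - intro t. apply adm_bot.
    - intros f Hf Hle. setoid_rewrite fmap_id in Hf. apply ind_split.
      + intro u. rewrite fmap_id, mu_eta. rewrite <- (Fe (eta M _)).
        rewrite phi_eta, fmap_mu_eta.
        eapply ole_trans; [apply phi_mono; [exact Hmon| apply Hle; exact Fd]|].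
        rewrite Fd. apply ole_refl.
      + intro s. rewrite fmap_id, mu_iota, phi_iota. 
        rewrite <- (Fe (iota M _)). rewrite phi_iota.
        rewrite fmap_mu_mu, <- Hnat.
        apply fmap_mono. apply Hmon. rewrite <- !fmap_comp. apply rellift_fmap.
        apply sim_gen. intro z. exists (e z).
        rewrite theta_Bmap, !theta_finf, eps_Bmap, !eps_finf.
        split; [|split; [|reflexivity]].
        * rewrite (fmap_comp _ _ _ _ (mu M) (finf C f)). apply fmap_mono. apply Hf.
        * rewrite <- fmap_comp. apply ole_refl.
    - intros D s HD HQ Hs.
      exact (adm_sup B _ _ _ _ (fun x => x) (mu M) (fun t => fmap (mu M) (e t)) D s HD HQ Hs). }
  intro t. apply ole_antisym; [apply D1|]. specialize (D2 t). rewrite fmap_id in D2. exact D2.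
Qed.

Lemma eta_hom (B : DCPOFunctor) (C : Cofree B) (S : Functor) (M : FreeMonad S)
  rho (Hmon : biGSOS_monotone C M rho) X (c : X -> B X) :
  coalg_hom B c (sharp C M rho c) (eta M).
Proof. intro x. rewrite <- sharp_fix by exact Hmon. rewrite phi_eta. reflexivity. Qed.

Lemma Smap_hom (B : DCPOFunctor) (C : Cofree B) (S : Functor) (M : FreeMonad S)
  rho (Hnat : biGSOS_natural C M rho) (Hmon : biGSOS_monotone C M rho) X Y
  (c : X -> B X) (d : Y -> B Y) (h : X -> Y) (Hh : coalg_hom B c d h) :
  coalg_hom B (sharp C M rho c) (sharp C M rho d) (Smap M h).
Proof.
  set (cs := sharp C M rho c). set (ds := sharp C M rho d).
  assert (Fc : forall t, phi C M rho c cs t = cs t) by (intro; apply sharp_fix; exact Hmon).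
  assert (Fd : forall t, phi C M rho d ds t = ds t) by (intro; apply sharp_fix; exact Hmon).
  assert (D1 : forall t, ole (fmap (fun x => x) (ds (Smap M h t))) (fmap (Smap M h) (cs t))).
  { refine (proj2 (lfp_ind B C S M rho Hmon _ d
      (fun g => forall t, ole (fmap (fun x => x) (g (Smap M h t))) (fmap (Smap M h) (cs t))) _ _ _)).
    - intro t. apply adm_bot.
    - intros g Hg _. setoid_rewrite fmap_id in Hg. apply ind_split.
      + intro x. rewrite fmap_id, Smap_eta, phi_eta, <- (Fc (eta M _)), phi_eta,
          fmap_Smap_eta, Hh. apply ole_refl.
      + intro s. rewrite fmap_id, Smap_iota, phi_iota, <- (Fc (iota M _)), phi_iota.
        rewrite fmap_Smap_mu, <- Hnat.
        apply fmap_mono. apply Hmon. rewrite <- !fmap_comp. apply rellift_fmap.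
        apply sim_gen. intro z. exists (cs z).
        rewrite theta_Bmap, !theta_finf, eps_Bmap, !eps_finf.
        split; [|split; [|reflexivity]].
        * rewrite (fmap_comp _ _ _ _ (Smap M h) (finf C g)). apply fmap_mono. apply Hg.
        * rewrite <- fmap_comp. apply ole_refl.
    - intros D s HD HQ Hs.
      exact (adm_sup B _ _ _ _ (fun x => x) (Smap M h) (fun t => fmap (Smap M h) (cs t)) D s HD HQ Hs). }
  assert (D2 : forall t, ole (fmap (Smap M h) (cs t)) (ds (Smap M h t))).
  { refine (proj2 (lfp_ind B C S M rho Hmon _ c
      (fun f => forall t, ole (fmap (Smap M h) (f t)) (ds (Smap M h t))) _ _ _)).
    - intro t. apply adm_bot.
    - intros f Hf _. apply ind_split.
      + intro x. rewrite phi_eta, Smap_eta, <- (Fd (eta M _)), phi_eta,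
          fmap_Smap_eta, Hh. apply ole_refl.
      + intro s. rewrite phi_iota, Smap_iota, <- (Fd (iota M _)), phi_iota.
        rewrite fmap_Smap_mu, <- Hnat.
        apply fmap_mono. apply Hmon. rewrite <- !fmap_comp. apply rellift_fmap.
        apply sim_gen. intro z. exists (f z).
        rewrite theta_Bmap, !theta_finf, eps_Bmap, !eps_finf.
        split; [|split; [|reflexivity]].
        * rewrite <- fmap_comp. apply ole_refl.
        * rewrite (fmap_comp _ _ _ _ (Smap M h) (finf C ds)). apply fmap_mono. apply Hf.
    - intros D s HD HQ Hs.
      exact (adm_sup B _ _ _ _ (Smap M h) (fun t => t) (fun t => ds (Smap M h t)) D s HD HQ Hs). }
  intro t. apply ole_antisym; [apply D2|]. specialize (D1 t). rewrite fmap_id in D1. exact D1.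
Qed.

Theorem mainTheorem9 (B : DCPOFunctor) (C : Cofree B) (S : Functor) (M : FreeMonad S)
  (rho : forall X, S (Binf C X) -> B (Sstar M X))
  (HB : preserves_weak_pullbacks B)
  (Hnat : biGSOS_natural C M rho)
  (Hmon : biGSOS_monotone C M rho) :
  (forall (X : Type) (c : X -> B X), coalg_hom B c (sharp C M rho c) (eta M)) /\
  (forall (X : Type) (c : X -> B X),
      coalg_hom B (sharp C M rho (sharp C M rho c)) (sharp C M rho c) (mu M)) /\
  lifted_monad B C M rho.
Proof.
  split; [intros; apply eta_hom; exact Hmon|].
  split; [intros; apply mu_hom; assumption|].
  unfold lifted_monad.
  split; [intros; apply Smap_hom; assumption|].
  split; [intros; apply Smap_id|].
  split; [intros; apply Smap_comp|].
  split; [intros; apply eta_hom; exact Hmon|].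
  split; [intros; apply mu_hom; assumption|].
  split; [intros; apply Smap_eta|].
  split; [intros; apply Smap_mu|].
  split; [intros; apply mu_eta|].
  split; [intros; apply mu_Smap_eta|].
  intros; apply mu_mu.
Qed.
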